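(* For every positive integer $t$, $md_t \geq \left\lceil \frac{t+1}{2} \right\rceil$. Equivalently, for every voter matrix $V$ with $t$ topics there is a proposal supported by $V$ that contains at least $\lceil (t+1)/2\rceil$ entries $Y$.
   Context: Let $t$ be a positive integer (the number of topics). A voter matrix with $t$ topics is a matrix $V\in\{Y,N\}^{n\times t}$ for some positive integer $n$ (the number of voters; rows are voters), subject to the standing assumption that in every column the number of entries $Y$ is at least the number of entries $N$ (so $Y$ is the majority opinion on every topic). $\mathcal{V}_t$ denotes the set of all voter matrices with $t$ topics and any number of voters. A proposal is a vector $p\in\{Y,N\}^t$. A voter (row) $v$ supports $p$ if the Hamming distance between $v$ and $p$ is at most $t/2$. A proposal $p$ is supported by $V$ if at least $n/2$ of the rows of $V$ support $p$. The number of majority decisions of a proposal is the number of topics on which it agrees with the majority opinion, i.e. its number of entries $Y$. For $V$, $md_V$ is the maximum number $m$ such that there exists a proposal supported by $V$ with $m$ majority decisions, and $md_t=\min_{V\in\mathcal{V}_t} md_V$. *)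

(* Defs.v *)
From mathcomp Require Import all_boot all_algebra.
Set Implicit Arguments. Unset Strict Implicit. Unset Printing Implicit Defensive.

(* Convention: entry Y is encoded as [true], entry N as [false].
   A voter matrix with n voters and t topics is a matrix 'M[bool]_(n, t)
   (rows = voters), a proposal is a row vector 'rV[bool]_t. *)

Definition colY n t (V : 'M[bool]_(n, t)) (j : 'I_t) : nat :=
  #|[set i : 'I_n | V i j]|.

(* standing assumption: Y is (weakly) the majority opinion on every topic *)
Definition voter_matrix n t (V : 'M[bool]_(n, t)) : Prop :=
  (0 < n)%N /\ forall j : 'I_t, (n <= 2 * colY V j)%N.

Definition hamming_row n t (V : 'M[bool]_(n, t)) (i : 'I_n) (p : 'rV[bool]_t) : nat :=
  #|[set j : 'I_t | V i j != p ord0 j]|.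

Definition supports n t (V : 'M[bool]_(n, t)) (i : 'I_n) (p : 'rV[bool]_t) : bool :=
  (2 * hamming_row V i p <= t)%N.

Definition supported n t (V : 'M[bool]_(n, t)) (p : 'rV[bool]_t) : bool :=
  (n <= 2 * #|[set i : 'I_n | supports V i p]|)%N.

Definition majority_decisions t (p : 'rV[bool]_t) : nat :=
  #|[set j : 'I_t | p ord0 j]|.

(* Main.v *)
Require Import Defs.
From mathcomp Require Import all_boot all_algebra.
From mathcomp Require Import zify.
Set Implicit Arguments. Unset Strict Implicit. Unset Printing Implicit Defensive.

Definition Yc t (p : 'rV[bool]_t) : nat := #|[set k | p ord0 k]|.
Definition ham t (v : 'I_t -> bool) (p : 'rV[bool]_t) : nat :=
  #|[set k | v k != p ord0 k]|.
Definition flip t (j : 'I_t) (p : 'rV[bool]_t) : 'rV[bool]_t :=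
  \row_k ((k == j) (+) p ord0 k).

Lemma flipE t (j k : 'I_t) (p : 'rV[bool]_t) : flip j p ord0 k = (k == j) (+) p ord0 k.
Proof. by rewrite mxE. Qed.

Lemma flipK t (j : 'I_t) : involutive (flip j).
Proof. by move=> p; apply/rowP=> k; rewrite !flipE addbA addbb. Qed.

Lemma Yc_flip t (j : 'I_t) (p : 'rV[bool]_t) : p ord0 j -> Yc p = (Yc (flip j p)).+1.
Proof.
move=> pj; rewrite /Yc (cardsD1 j) inE pj add1n; congr _.+1.
apply: eq_card=> k; rewrite !inE flipE; case: (eqVneq k j)=> [->|_] //=.
by rewrite pj.
Qed.

Lemma Yc_flipN t (j : 'I_t) (p : 'rV[bool]_t) : ~~ p ord0 j -> Yc (flip j p) = (Yc p).+1.
Proof.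
move=> pj; rewrite -{2}(flipK j p); apply: Yc_flip.
by rewrite flipE eqxx (negbTE pj).
Qed.

Lemma ham_flip t (v : 'I_t -> bool) (j : 'I_t) (p : 'rV[bool]_t) :
  v j != p ord0 j -> ham v p = (ham v (flip j p)).+1.
Proof.
move=> vj; rewrite /ham (cardsD1 j) inE vj add1n; congr _.+1.
apply: eq_card=> k; rewrite !inE flipE; case: (eqVneq k j)=> [->|_] //=.
by move: vj; case: (v j); case: (p ord0 j).
Qed.

Lemma ham_flipE t (v : 'I_t -> bool) (j : 'I_t) (p : 'rV[bool]_t) :
  v j = p ord0 j -> ham v (flip j p) = (ham v p).+1.
Proof.
move=> vj; rewrite -{2}(flipK j p); apply: ham_flip.
by rewrite flipE eqxx vj; case: (p ord0 j).
Qed.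

Lemma card_compl t (P : pred 'I_t) : #|[set k | P k]| + #|[set k | ~~ P k]| = t.
Proof.
have -> : [set k | ~~ P k] = ~: [set k | P k] by apply/setP=> k; rewrite !inE.
by rewrite cardsC card_ord.
Qed.

Lemma Yc_N t (p : 'rV[bool]_t) : Yc p + #|[set k | ~~ p ord0 k]| = t.
Proof. exact: (card_compl (fun k => p ord0 k)). Qed.

Lemma ham_agree t (v : 'I_t -> bool) (p : 'rV[bool]_t) :
  ham v p + #|[set k | p ord0 k == v k]| = t.
Proof.
rewrite /ham; apply: etrans (card_compl (fun k => v k != p ord0 k)); congr (_ + _).
by apply: eq_card=> k; rewrite !inE negbK eq_sym.
Qed.

Definition rmap t (j : 'I_t) (v : 'I_t -> bool) (p : 'rV[bool]_t) : 'rV[bool]_t :=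
  \row_k ((k == j) || (v k != p ord0 k)).
Definition smap t (j : 'I_t) (v : 'I_t -> bool) (p : 'rV[bool]_t) : 'rV[bool]_t :=
  \row_k ((k == j) || (p ord0 k == v k)).

Lemma rmap_j t (j : 'I_t) v p : rmap j v p ord0 j.
Proof. by rewrite mxE eqxx. Qed.
Lemma smap_j t (j : 'I_t) v p : smap j v p ord0 j.
Proof. by rewrite mxE eqxx. Qed.

Lemma Yc_rmap t (j : 'I_t) (v : 'I_t -> bool) (p : 'rV[bool]_t) :
  v j -> p ord0 j -> Yc (rmap j v p) = (ham v p).+1.
Proof.
move=> vj pj; rewrite /Yc (cardsD1 j) inE rmap_j add1n; congr _.+1.
apply: eq_card=> k; rewrite !inE mxE; case: (eqVneq k j)=> [->|_] //=.
by rewrite vj pj.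
Qed.

Lemma ham_rmap t (j : 'I_t) (v : 'I_t -> bool) (p : 'rV[bool]_t) :
  v j -> p ord0 j -> Yc p = (ham v (rmap j v p)).+1.
Proof.
move=> vj pj; rewrite /Yc (cardsD1 j) inE pj add1n; congr _.+1.
apply: eq_card=> k; rewrite !inE mxE; case: (eqVneq k j)=> [->|_] //=.
  by rewrite vj.
by case: (v k); case: (p ord0 k).
Qed.

Lemma Yc_smap t (j : 'I_t) (v : 'I_t -> bool) (p : 'rV[bool]_t) :
  ~~ v j -> ~~ p ord0 j -> Yc (smap j v p) + ham v p = t.
Proof.
move=> vj pj; rewrite addnC; apply: etrans (ham_agree v p); congr (_ + _).
apply: eq_card=> k; rewrite !inE mxE; case: (eqVneq k j)=> [->|_] //=.
by rewrite (negbTE vj) (negbTE pj).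
Qed.

Lemma ham_smap t (j : 'I_t) (v : 'I_t -> bool) (p : 'rV[bool]_t) :
  ~~ v j -> ~~ p ord0 j -> Yc p + ham v (smap j v p) = t.
Proof.
move=> vj pj; apply: etrans (Yc_N p); congr (_ + _).
apply: eq_card=> k; rewrite !inE mxE; case: (eqVneq k j)=> [->|_] //=.
  by rewrite (negbTE vj) (negbTE pj).
by case: (v k); case: (p ord0 k).
Qed.

Lemma rmap_inj t (j : 'I_t) (v : 'I_t -> bool) (p1 p2 : 'rV[bool]_t) :
  p1 ord0 j -> p2 ord0 j -> rmap j v p1 = rmap j v p2 -> p1 = p2.
Proof.
move=> h1 h2 /rowP e; apply/rowP=> k; move: (e k); rewrite !mxE.
case: (eqVneq k j)=> [->|_] /=; first by rewrite h1 h2.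
by case: (v k); case: (p1 ord0 k); case: (p2 ord0 k).
Qed.

Lemma smap_inj t (j : 'I_t) (v : 'I_t -> bool) (p1 p2 : 'rV[bool]_t) :
  ~~ p1 ord0 j -> ~~ p2 ord0 j -> smap j v p1 = smap j v p2 -> p1 = p2.
Proof.
move=> h1 h2 /rowP e; apply/rowP=> k; move: (e k); rewrite !mxE.
case: (eqVneq k j)=> [->|_] /=; first by rewrite (negbTE h1) (negbTE h2).
by case: (v k); case: (p1 ord0 k); case: (p2 ord0 k).
Qed.

Lemma inj_card (T : finType) (A B : {set T}) (f : T -> T) :
  {in A &, injective f} -> (forall x, x \in A -> f x \in B) -> #|A| <= #|B|.
Proof.
move=> fi fAB; rewrite -(card_in_imset fi); apply: subset_leq_card.
by apply/subsetP=> y /imsetP [x xA ->]; exact: fAB.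
Qed.

Definition Sg t m (v : 'I_t -> bool) (p : 'rV[bool]_t) : bool :=
  (m.+1 <= Yc p) && (2 * ham v p <= t).

Lemma key_true t m (ht : t = m.*2.+1) (v : 'I_t -> bool) (j : 'I_t) : v j ->
  #|[set p : 'rV[bool]_t | ~~ p ord0 j && Sg m v p]|
  + #|[set p : 'rV[bool]_t | p ord0 j && (Yc p == m.+1)]|
  <= #|[set p : 'rV[bool]_t | p ord0 j && Sg m v p]|.
Proof.
move=> vj.
set A := [set p : 'rV[bool]_t | ~~ p ord0 j && Sg m v p].
set C := [set p : 'rV[bool]_t | p ord0 j && (Yc p == m.+1)].
have -> : #|A| + #|C| = #|A :|: C|.
  rewrite cardsU; have -> : A :&: C = set0.
    by apply/setP=> p; rewrite !inE; case: (p ord0 j); rewrite ?andbF.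
  by rewrite cards0 subn0.
pose f (p : 'rV[bool]_t) := if p ord0 j then (if 2 * ham v p <= t then p else rmap j v p)
            else flip j p.
have fA : forall x, x \in A -> [/\ f x = flip j x, (flip j x) ord0 j,
     m.+2 <= Yc (flip j x) & (ham v (flip j x)).+1 <= m].
  move=> x; rewrite !inE /Sg => /andP [xj /andP [h1 h2]].
  rewrite /f (negbTE xj) flipE eqxx (negbTE xj); split => //.
    by rewrite (Yc_flipN xj).
  have := ham_flip (j:=j) (v:=v) (p:=x); rewrite vj (negbTE xj) => /(_ isT) e.
  lia.
have fC : forall x, x \in C -> x ord0 j /\
     ((f x = x /\ Yc x = m.+1 /\ 2 * ham v x <= t) \/
      (f x = rmap j v x /\ m.+2 <= Yc (rmap j v x) /\ ham v (rmap j v x) = m)).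
  move=> x; rewrite !inE => /andP [xj /eqP yx]; split => //.
  rewrite /f xj; case: ifP => hh; [left | right]; split => //.
  have e1 := Yc_rmap vj xj; have e2 := ham_rmap vj xj.
  split; lia.
apply: (inj_card (f := f)).
  move=> x y; rewrite !inE => hx hy e.
  have hx' : (x \in A) || (x \in C) by rewrite !inE.
  have hy' : (y \in A) || (y \in C) by rewrite !inE.
  case/orP: hx' => [xA|xC]; case/orP: hy' => [yA|yC].
  - case: (fA x xA) (fA y yA) => [ex _ _ _] [ey _ _ _].
    by move: e; rewrite ex ey => e; rewrite -(flipK j x) e flipK.
  - case: (fA x xA) => [ex _ h1 h2]; case: (fC y yC) => [_ [[ey [h3 _]]|[ey [h3 h4]]]];
      move: e; rewrite ex ey => e.
      by move: h1; rewrite e; lia.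
    by move: h2; rewrite e; lia.
  - case: (fA y yA) => [ey _ h1 h2]; case: (fC x xC) => [_ [[ex [h3 _]]|[ex [h3 h4]]]];
      move: e; rewrite ex ey => e.
      by move: h1; rewrite -e; lia.
    by move: h2; rewrite -e; lia.
  - case: (fC x xC) => [xj [[ex [h1 h2]]|[ex [h1 h2]]]];
    case: (fC y yC) => [yj [[ey [h3 h4]]|[ey [h3 h4]]]];
      move: e; rewrite ex ey => e.
    + by [].
    + by move: h3; rewrite -e; lia.
    + by move: h1; rewrite e; lia.
    + exact: rmap_inj xj yj e.
move=> x; rewrite in_setU => /orP [xA|xC].
  case: (fA x xA) => [-> h0 h1 h2]; rewrite inE h0 /Sg /=; apply/andP; split; lia.
case: (fC x xC) => [xj [[-> [h1 h2]]|[-> [h1 h2]]]]; rewrite inE.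
  by rewrite xj /Sg h1 h2 leqnn.
rewrite rmap_j /Sg /=; apply/andP; split; lia.
Qed.

Lemma key_false t m (ht : t = m.*2.+1) (v : 'I_t -> bool) (j : 'I_t) : ~~ v j ->
  #|[set p : 'rV[bool]_t | ~~ p ord0 j && Sg m v p]|
  <= #|[set p : 'rV[bool]_t | p ord0 j && Sg m v p]|.
Proof.
move=> vj.
set A := [set p : 'rV[bool]_t | ~~ p ord0 j && Sg m v p].
pose f (p : 'rV[bool]_t) := if ham v p < m then flip j p else smap j v p.
have fA : forall x, x \in A -> ~~ x ord0 j /\
   ((f x = flip j x /\ m.+2 <= Yc (flip j x) /\ ham v (flip j x) <= m) \/
    (f x = smap j v x /\ Yc (smap j v x) = m.+1 /\ ham v (smap j v x) <= m)).
  move=> x; rewrite !inE /Sg => /andP [xj /andP [h1 h2]]; split => //.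
  rewrite /f; case: ifP => hh; [left | right]; split => //.
    have e1 := Yc_flipN xj.
    have e2 := ham_flipE (v:=v) (j:=j) (p:=x).
    rewrite (negbTE vj) (negbTE xj) in e2; have := e2 erefl => e3.
    split; lia.
  have e1 := Yc_smap vj xj; have e2 := ham_smap vj xj.
  split; lia.
apply: (inj_card (f := f)).
  move=> x y xA yA e.
  case: (fA x xA) => [xj [[ex [h1 h2]]|[ex [h1 h2]]]];
  case: (fA y yA) => [yj [[ey [h3 h4]]|[ey [h3 h4]]]];
    move: e; rewrite ex ey => e.
  + by rewrite -(flipK j x) e flipK.
  + by move: h1; rewrite e; lia.
  + by move: h3; rewrite -e; lia.
  + exact: smap_inj xj yj e.
move=> x xA; case: (fA x xA) => [xj [[-> [h1 h2]]|[-> [h1 h2]]]]; rewrite inE.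
  rewrite flipE eqxx (negbTE xj) /Sg /=; apply/andP; split; lia.
rewrite smap_j /Sg /=; apply/andP; split; lia.
Qed.

Lemma cardE' (T : finType) (Q : pred T) : #|[set x | Q x]| = \sum_x (Q x : nat).
Proof.
rewrite -sum1_card big_mkcond /=; apply: eq_bigr => x _.
by rewrite inE; case: (Q x).
Qed.

Lemma keyB t m (ht : t = m.*2.+1) (j : 'I_t) :
  #|[set p : 'rV[bool]_t | p ord0 j && (m.+1 <= Yc p)]|
  <= #|[set p : 'rV[bool]_t | ~~ p ord0 j && (m.+1 <= Yc p)]|
     + #|[set p : 'rV[bool]_t | p ord0 j && (Yc p == m.+1)]|.
Proof.
set C := [set p : 'rV[bool]_t | p ord0 j && (Yc p == m.+1)].
set D := [set p : 'rV[bool]_t | p ord0 j && (m.+2 <= Yc p)].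
apply: (@leq_trans #|C :|: D|).
  apply: subset_leq_card; apply/subsetP=> p; rewrite !inE.
  case/andP=> -> /=; rewrite leq_eqVlt eq_sym; case/orP=> -> //; by rewrite orbT.
rewrite cardsU addnC; apply: leq_trans (leq_subr _ _) _; rewrite leq_add2r.
apply: (inj_card (f := flip j)).
  by move=> x y _ _ e; rewrite -(flipK j x) e flipK.
move=> x; rewrite !inE => /andP [xj h].
rewrite flipE eqxx xj /=; have := Yc_flip xj; lia.
Qed.

Lemma odd_case t m (ht : t = m.*2.+1) n (V : 'M[bool]_(n, t)) :
  (0 < n)%N -> (forall j, n <= 2 * colY V j) ->
  exists p : 'rV[bool]_t, supported V p /\ m.+1 <= Yc p.
Proof.
move=> n0 hcol.
case: (pickP (fun p : 'rV[bool]_t => supported V p && (m.+1 <= Yc p)))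
  => [p /andP [h1 h2] | hno]; first by exists p.
exfalso.
pose F (p : 'rV[bool]_t) := #|[set i | Sg m (V i) p]|.
pose Nc (p : 'rV[bool]_t) := #|[set k | ~~ p ord0 k]|.
pose Cc (j : 'I_t) := #|[set p : 'rV[bool]_t | p ord0 j && (Yc p == m.+1)]|.
have H1 : forall (P : pred 'rV[bool]_t),
    \sum_i #|[set p | P p && Sg m (V i) p]| = \sum_(p : 'rV[bool]_t) P p * F p.
  move=> P; under eq_bigr do rewrite cardE'.
  rewrite exchange_big /=; apply: eq_bigr => p _.
  rewrite /F cardE' big_distrr /=; apply: eq_bigr => i _.
  by case: (P p); case: (Sg _ _ _).
have Step1 : forall j, \sum_(p : 'rV[bool]_t) (~~ p ord0 j) * F p + colY V j * Cc j
                       <= \sum_(p : 'rV[bool]_t) (p ord0 j) * F p.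
  move=> j; rewrite -(H1 (fun p => ~~ p ord0 j)) -(H1 (fun p => p ord0 j)).
  rewrite /colY cardE' big_distrl -big_split /=; apply: leq_sum => i _.
  case vj: (V i j).
    by rewrite mul1n; exact: (key_true ht vj).
  by rewrite mul0n addn0; apply: (key_false ht (v := V i) (j := j)); rewrite vj.
set A1 := \sum_(p : 'rV[bool]_t) F p * Yc p.
set A2 := \sum_(p : 'rV[bool]_t) F p * Nc p.
set K := \sum_j colY V j * Cc j.
set B1 := \sum_(p : 'rV[bool]_t) (m.+1 <= Yc p) * Yc p.
set B2 := \sum_(p : 'rV[bool]_t) (m.+1 <= Yc p) * Nc p.
set Cs := \sum_j Cc j.
have Step2 : A2 + K <= A1.
  have := @leq_sum _ (index_enum 'I_t) xpredT _ _ (fun j _ => Step1 j); rewrite big_split /=.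
  have -> : \sum_j \sum_(p : 'rV[bool]_t) (p ord0 j) * F p = A1.
    rewrite exchange_big; apply: eq_bigr => p _.
    by rewrite -big_distrl /= mulnC /Yc cardE'.
  have -> : \sum_j \sum_(p : 'rV[bool]_t) (~~ p ord0 j) * F p = A2.
    rewrite exchange_big; apply: eq_bigr => p _.
    by rewrite -big_distrl /= mulnC /Nc cardE'.
  by [].
have Step3 : B1 <= B2 + Cs.
  have := @leq_sum _ (index_enum 'I_t) xpredT _ _ (fun j _ => keyB ht j).
  rewrite big_split /=.
  have -> : \sum_j #|[set p : 'rV[bool]_t | p ord0 j && (m.+1 <= Yc p)]| = B1.
    under eq_bigr do rewrite cardE'.
    rewrite exchange_big; apply: eq_bigr => p _.
    rewrite /Yc cardE' big_distrr /=; apply: eq_bigr => j _.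
    by case: (p ord0 j); case: (_ <= _).
  have -> : \sum_j #|[set p : 'rV[bool]_t | ~~ p ord0 j && (m.+1 <= Yc p)]| = B2.
    under eq_bigr do rewrite cardE'.
    rewrite exchange_big; apply: eq_bigr => p _.
    rewrite /Nc cardE' big_distrr /=; apply: eq_bigr => j _.
    by case: (p ord0 j); case: (_ <= _).
  by [].
have Step4 : 2 * A1 + n.-1 * B2 <= 2 * A2 + n.-1 * B1.
  rewrite /A1 /A2 /B1 /B2 !big_distrr -!big_split /=; apply: leq_sum => p _.
  have eYN := Yc_N p; rewrite -/(Nc p) in eYN.
  case hP : (m.+1 <= Yc p); last first.
    have -> : F p = 0.
      rewrite /F; apply/eqP; rewrite cards_eq0; apply/eqP/setP => i.
      by rewrite !inE /Sg hP.
    by rewrite !mul0n.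
  have := hno p; rewrite hP andbT /supported => /negbT.
  rewrite -ltnNge => hs.
  have -> : F p = #|[set i | supports V i p]|.
    by apply: eq_card => i; rewrite !inE /Sg hP.
  move: hs; set f := #|[set i | supports V i p]| => hs.
  rewrite !mul1n.
  have hNY : Nc p <= Yc p by lia.
  move: hNY; set y := Yc p; set z := Nc p => hNY.
  have [d ->] : exists d, y = z + d by exists (y - z); lia.
  have [a ea] : exists a, n.-1 = 2 * f + a by exists (n.-1 - 2 * f); lia.
  rewrite ea; nia.
have Step5 : B2 < B1.
  pose p0 : 'rV[bool]_t := const_mx true.
  have Y0 : Yc p0 = t.
    rewrite /Yc -[RHS]card_ord; apply: eq_card => k; by rewrite !inE mxE.
  have N0 : Nc p0 = 0.
    rewrite /Nc; apply/eqP; rewrite cards_eq0; apply/eqP/setP => k.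
    by rewrite !inE mxE.
  rewrite /B1 /B2 (bigD1 p0) //= (bigD1 p0 (P := predT)) //= Y0 N0.
  have : \sum_(p | p != p0) (m.+1 <= Yc p) * Nc p
         <= \sum_(p | p != p0) (m.+1 <= Yc p) * Yc p.
    apply: leq_sum => p _; case hP : (m.+1 <= Yc p); rewrite ?mul0n //.
    have := Yc_N p; rewrite -/(Nc p); rewrite !mul1n; lia.
  have : m.+1 <= t by lia.
  move=> ht1; rewrite ht1 !mul1n add0n => hs; have tp : 0 < t by rewrite ht.
  by rewrite -add1n; apply: leq_add.
have Step6 : n * Cs <= 2 * K.
  rewrite /Cs /K big_distrr big_distrr /=; apply: leq_sum => j _.
  by rewrite mulnA leq_mul2r hcol orbT.
nia.
Qed.

Lemma card_recl s (P : pred 'I_s.+1) :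
  #|[set k | P k]| = P ord0 + #|[set k : 'I_s | P (lift ord0 k)]|.
Proof. by rewrite !cardE' big_ord_recl. Qed.

Unset Implicit Arguments.

(* ceil((t+1)/2) = (t + 2) %/ 2 *)
Theorem theorem4p6 (t : nat) (ht : (0 < t)%N) (n : nat) (V : 'M[bool]_(n, t)) :
  voter_matrix V ->
  exists p : 'rV[bool]_t, supported V p /\ ((t + 2) %/ 2 <= majority_decisions p)%N.
Proof.
move=> [n0 hcol].
have [m [tm|tm]] : exists m, t = m.*2.+1 \/ t = m.*2.+2.
  have e := odd_double_half t; case: (boolP (odd t)) => o.
    by exists t./2; left; move: e; rewrite o add1n.
  exists (t./2).-1; right; move: e; rewrite (negbTE o) add0n => e.
  move: e; set h := t./2 => e; rewrite -e in ht *.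
  by case: h e ht => [|k] //= _ _; rewrite doubleS.
  have [p [h1 h2]] := odd_case tm n0 hcol.
  by exists p; split => //; rewrite /majority_decisions -/(Yc p); subst t; lia.
subst t.
pose V' : 'M[bool]_(n, m.*2.+1) := (\matrix_(i < n, k < m.*2.+1) V i (lift ord0 k))%R.
have hcol' : forall k, n <= 2 * colY V' k.
  move=> k; apply: leq_trans (hcol (lift ord0 k)) _; rewrite leq_mul2l; apply/orP; right.
  by rewrite /colY; apply: subset_leq_card; apply/subsetP=> i; rewrite !inE mxE.
have [p' [h1 h2]] := odd_case (erefl (m.*2.+1)) n0 hcol'.
pose p : 'rV[bool]_(m.*2.+2) :=
  (\row_k (if unlift ord0 k is Some k' then p' ord0 k' else true))%R.
have p0 : p ord0 ord0 by rewrite mxE unlift_none.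
have pl : forall k, p ord0 (lift ord0 k) = p' ord0 k by move=> k; rewrite mxE liftK.
have eY : Yc p = (Yc p').+1.
  rewrite /Yc card_recl p0 add1n; congr _.+1; apply: eq_card => k; by rewrite !inE pl.
exists p; split; last first.
  rewrite /majority_decisions -/(Yc p) eY; lia.
move: h1; rewrite /supported => h1; apply: leq_trans h1 _; rewrite leq_mul2l; apply/orP; right.
apply: subset_leq_card; apply/subsetP=> i; rewrite !inE /supports /hamming_row.
rewrite (card_recl (fun k => V i k != p ord0 k)) /=.
have -> : #|[set k | V i (lift ord0 k) != p ord0 (lift ord0 k)]| =
          #|[set k | V' i k != p' ord0 k]| by apply: eq_card => k; rewrite !inE pl mxE.
move: (V i ord0 != p ord0 ord0) => b; case: b => /=; lia.
Qed.
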